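(* Let $F$ be a group and $H \subseteq F$ a subgroup. Let $F'$ be an isomorphic copy of $F$, with $H' \subseteq F'$ the copy of $H$, and let $G = F *_{H=H'} F'$ be the double of $F$ along $H$ (the amalgamated free product of $F$ and $F'$ identifying each $h \in H$ with its copy $h' \in H'$). Let $\phi : F \to F$ be an endomorphism with $\phi(H) \subseteq H$, and let $\Phi : G \to G$ be the induced endomorphism, which acts as $\phi$ on $F$ and as the corresponding copy $\phi'$ of $\phi$ on $F'$. Suppose that the sequence of subgroups $\phi^{-n}(H) = \{g \in F : \phi^n(g) \in H\}$, $n = 0,1,2,\dots$, is strictly increasing. Then the sequence of subgroups $\operatorname{Kernel}(\Phi^n)$, $n = 0,1,2,\dots$, is strictly increasing.
   Context: The induced map $\Phi$ is well defined because $\phi(H)\subseteq H$, so $\phi$ and its copy $\phi'$ agree on the amalgamated subgroup $H = H'$. *)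

(* Defs.v *)
From Stdlib Require Import Arith.

Record group := Group {
  carrier :> Type;
  gmul : carrier -> carrier -> carrier;
  gone : carrier;
  ginv : carrier -> carrier;
  gmulA : forall x y z, gmul x (gmul y z) = gmul (gmul x y) z;
  gmul1l : forall x, gmul gone x = x;
  gmul1r : forall x, gmul x gone = x;
  gmulVl : forall x, gmul (ginv x) x = gone;
  gmulVr : forall x, gmul x (ginv x) = gone
}.

Arguments gmul {g}.
Arguments gone {g}.
Arguments ginv {g}.

Definition is_hom {A B : group} (f : A -> B) : Prop :=
  forall x y : A, f (gmul x y) = gmul (f x) (f y).

Definition is_subgroup {A : group} (H : A -> Prop) : Prop :=
  H gone /\ (forall x y, H x -> H y -> H (gmul x y)) /\ (forall x, H x -> H (ginv x)).

(* [is_double F H G i1 i2]: G together with i1 : F -> G (the factor F) and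
   i2 : F -> G (the factor F', i.e. F composed with the isomorphism F ~ F')
   is the amalgamated free product F *_{H = H'} F', characterized by its
   universal property (pushout of F <- H -> F' in the category of groups). *)
Definition is_double (F : group) (H : F -> Prop) (G : group) (i1 i2 : F -> G) : Prop :=
  is_hom i1 /\ is_hom i2 /\ (forall h, H h -> i1 h = i2 h) /\
  forall (K : group) (f1 f2 : F -> K),
    is_hom f1 -> is_hom f2 -> (forall h, H h -> f1 h = f2 h) ->
    exists u : G -> K, is_hom u /\ (forall x, u (i1 x) = f1 x) /\ (forall x, u (i2 x) = f2 x) /\
      (forall v : G -> K, is_hom v -> (forall x, v (i1 x) = f1 x) ->
         (forall x, v (i2 x) = f2 x) -> forall g, v g = u g).

Definition strictly_increasing {A : Type} (Sq : nat -> A -> Prop) : Prop :=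
  forall n : nat, (forall x, Sq n x -> Sq (n + 1) x) /\ exists x, Sq (n + 1) x /\ ~ Sq n x.

(* Main.v *)
Require Import Defs.
From Stdlib Require Import Arith FunctionalExtensionality ProofIrrelevance ClassicalEpsilon Bool.

Arguments gmulA {g}.
Arguments gmul1l {g}.
Arguments gmul1r {g}.
Arguments gmulVl {g}.
Arguments gmulVr {g}.

Section GL.
Variable A : group.
Lemma mul_cancel_l (a x y : A) : gmul a x = gmul a y -> x = y.
Proof. intro E. rewrite <- (gmul1l x), <- (gmul1l y), <- (gmulVl a), <- !gmulA, E. reflexivity. Qed.
Lemma mul_cancel_r (a x y : A) : gmul x a = gmul y a -> x = y.
Proof. intro E. rewrite <- (gmul1r x), <- (gmul1r y), <- (gmulVr a), !gmulA, E. reflexivity. Qed.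
Lemma inv_mul (x y : A) : ginv (gmul x y) = gmul (ginv y) (ginv x).
Proof. apply (mul_cancel_l (gmul x y)). rewrite gmulVr, gmulA, <- (gmulA x y), gmulVr, gmul1r, gmulVr. reflexivity. Qed.
Lemma div1 (a b : A) : gmul a (ginv b) = gone -> a = b.
Proof. intro E. apply (mul_cancel_r (ginv b)). rewrite E, gmulVr. reflexivity. Qed.
End GL.

Lemma hom1 (A B : group) (f : A -> B) : is_hom f -> f gone = gone.
Proof. intro hf. apply (mul_cancel_l _ (f gone)). rewrite <- hf, !gmul1r. reflexivity. Qed.
Lemma homV (A B : group) (f : A -> B) x : is_hom f -> f (ginv x) = ginv (f x).
Proof. intro hf. apply (mul_cancel_l _ (f x)). rewrite <- hf, !gmulVr. apply hom1; auto. Qed.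
Lemma hom_iter (A : group) (f : A -> A) n : is_hom f -> is_hom (Nat.iter n f).
Proof. intros hf; induction n; intros x y; simpl; auto. rewrite IHn; apply hf. Qed.

Section Perm.
Variable X : Type.
Record perm := Perm { pf : X -> X; pg : X -> X;
  pfg : forall x, pf (pg x) = x; pgf : forall x, pg (pf x) = x }.
Lemma perm_eq (p q : perm) : (forall x, pf p x = pf q x) -> (forall x, pg p x = pg q x) -> p = q.
Proof.
  destruct p as [f g a b], q as [f' g' a' b']; simpl; intros E1 E2.
  apply functional_extensionality in E1. apply functional_extensionality in E2.
  subst. f_equal; apply proof_irrelevance.
Qed.
Definition pmul (p q : perm) : perm.
  refine (Perm (fun x => pf p (pf q x)) (fun x => pg q (pg p x)) _ _);
  intro x; rewrite ?pfg, ?pgf; reflexivity.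
Defined.
Definition pone : perm := Perm (fun x => x) (fun x => x) (fun x => eq_refl) (fun x => eq_refl).
Definition pinv (p : perm) : perm := Perm (pg p) (pf p) (pgf p) (pfg p).
Definition Sym : group.
  refine (Group perm pmul pone pinv _ _ _ _ _);
  intros; apply perm_eq; simpl; intros; rewrite ?pfg, ?pgf; reflexivity.
Defined.
End Perm.

Lemma sep (F : group) (H : F -> Prop) (G : group) (i1 i2 : F -> G) y :
  is_subgroup H -> is_double F H G i1 i2 -> ~ H y -> i1 y <> i2 y.
Proof.
  intros [H1 [HM HV]] [_ [_ [_ U]]] Hy E.
  set (X := (F * bool)%type).
  set (dec := fun z : F => if excluded_middle_informative (H z) then true else false).
  set (tau := fun p : X => (fst p, xorb (dec (fst p)) (snd p))).
  assert (tt : forall p, tau (tau p) = p).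
  { intros [z b]; unfold tau; simpl. destruct (dec z), b; reflexivity. }
  set (T := Perm X tau tau tt tt : Sym X).
  assert (lf : forall g : F, forall p : X, (fun p : X => (gmul g (fst p), snd p))
      ((fun p : X => (gmul (ginv g) (fst p), snd p)) p) = p).
  { intros g [z b]; simpl. rewrite gmulA, gmulVr, gmul1l; reflexivity. }
  assert (lg : forall g : F, forall p : X, (fun p : X => (gmul (ginv g) (fst p), snd p))
      ((fun p : X => (gmul g (fst p), snd p)) p) = p).
  { intros g [z b]; simpl. rewrite gmulA, gmulVl, gmul1l; reflexivity. }
  set (f1 := fun g : F => Perm X _ _ (lf g) (lg g) : Sym X).
  set (f2 := fun g : F => gmul T (gmul (f1 g) T) : Sym X).
  assert (h1 : is_hom f1).
  { intros a b. apply perm_eq; intros [z c]; simpl.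
    - rewrite gmulA; reflexivity.
    - rewrite inv_mul, gmulA; reflexivity. }
  assert (TT : gmul T T = (gone : Sym X)). { apply perm_eq; intro; apply tt. }
  assert (h2 : is_hom f2).
  { intros a b. unfold f2. rewrite h1.
    rewrite <- !gmulA. f_equal. f_equal. rewrite (gmulA T T), TT, gmul1l. reflexivity. }
  assert (decM : forall h z, H h -> dec (gmul h z) = dec z).
  { intros h z Hh. unfold dec.
    destruct (excluded_middle_informative (H (gmul h z))) as [a|a];
    destruct (excluded_middle_informative (H z)) as [b|b]; auto; exfalso.
    all: first [ apply b; rewrite <- (gmul1l z), <- (gmulVl h), <- gmulA; apply HM; auto
               | apply a; auto ]. }
  assert (agree : forall h, H h -> f1 h = f2 h).
  { intros h Hh. unfold f2.
    assert (C : gmul (f1 h) T = gmul T (f1 h)).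
    { apply perm_eq; intros [z c]; simpl; unfold tau; simpl.
      - rewrite decM; auto.
      - rewrite decM; auto. }
    rewrite C, gmulA, TT, gmul1l. reflexivity. }
  destruct (U (Sym X) f1 f2 h1 h2 agree) as [u [_ [u1 [u2 _]]]].
  assert (E2 : f1 y = f2 y). { rewrite <- u1, <- u2, E. reflexivity. }
  assert (P := f_equal (fun p : Sym X => pf X p (gone, false)) E2). simpl in P.
  unfold tau in P; simpl in P.
  unfold dec in P.
  destruct (excluded_middle_informative (H gone)); [|contradiction].
  destruct (excluded_middle_informative (H (gmul y gone))) as [a|a].
  - rewrite gmul1r in a; contradiction.
  - simpl in P. inversion P.
Qed.

Theorem lemma1 (F : group) (H : F -> Prop) (G : group) (i1 i2 : F -> G)
  (phi : F -> F) (Phi : G -> G) :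
  is_subgroup H ->
  is_double F H G i1 i2 ->
  is_hom phi ->
  (forall h, H h -> H (phi h)) ->
  is_hom Phi ->
  (forall x, Phi (i1 x) = i1 (phi x)) ->
  (forall x, Phi (i2 x) = i2 (phi x)) ->
  strictly_increasing (fun n x => H (Nat.iter n phi x)) ->
  strictly_increasing (fun n (g : G) => Nat.iter n Phi g = gone).
Proof.
  intros HS HD hphi Hphi hPhi P1 P2 SI n.
  assert (I1 : forall m x, Nat.iter m Phi (i1 x) = i1 (Nat.iter m phi x)).
  { induction m; intros; simpl; auto. rewrite IHm; auto. }
  assert (I2 : forall m x, Nat.iter m Phi (i2 x) = i2 (Nat.iter m phi x)).
  { induction m; intros; simpl; auto. rewrite IHm; auto. }
  assert (hi1 : is_hom i1) by apply HD.
  assert (hi2 : is_hom i2) by apply HD.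
  assert (ag : forall h, H h -> i1 h = i2 h) by apply HD.
  split.
  - intros g E. rewrite Nat.add_1_r. simpl. rewrite E. apply hom1; auto.
  - destruct (SI n) as [_ [x [Hx Hnx]]].
    exists (gmul (i1 x) (ginv (i2 x))).
    assert (K : forall m, Nat.iter m Phi (gmul (i1 x) (ginv (i2 x)))
                 = gmul (i1 (Nat.iter m phi x)) (ginv (i2 (Nat.iter m phi x)))).
    { intro m. rewrite (hom_iter _ _ m hPhi), homV by (apply hom_iter; auto).
      rewrite I1, I2. reflexivity. }
    split.
    + rewrite K, ag, gmulVr; auto.
    + rewrite K. intro E. apply div1 in E. revert E. apply (sep F H G); auto.
Qed.
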